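(* Let $f:\mathbb{E}\to\mathbb{R}$ be continuous on some neighborhood of $\bar x\in\mathbb{E}$ and $\ell$-stable at $\bar x$, and suppose $f$ is strongly pseudoconvex at the point $\bar x$. Then $\bar x$ is an isolated local minimizer of second order of $f$ if and only if $\nabla f(\bar x)=0$ (the Fréchet derivative of $f$ at $\bar x$ exists under these hypotheses).
   Context: $\mathbb{E}$ is a real finite-dimensional Euclidean space with norm $\|\cdot\|$. Lower Dini directional derivative: $f'_D(y;u)=\liminf_{t\downarrow 0}t^{-1}[f(y+tu)-f(y)]$. $f$ is $\ell$-stable at $x$ iff there exist a neighborhood $U$ of $x$ and $K>0$ with $|f'_D(y;u)-f'_D(x;u)|\le K\|y-x\|\,\|u\|$ for all $y\in U$, $u\in\mathbb{E}$. $f$ is strongly pseudoconvex at $x$ iff for every $u\in\mathbb{E}$ with $\|u\|=1$ and $f'_D(x;u)=0$ there exist $\delta>0$, $\alpha>0$ with $f(x+tu)\ge f(x)+\alpha t^2$ for all $t\in(0,\delta)$. A point $\bar x$ is an isolated local minimizer of second order iff there exist a neighborhood $N$ of $\bar x$ and $C>0$ with $f(x)>f(\bar x)+C\|x-\bar x\|^2$ for all $x\in N\setminus\{\bar x\}$. *)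

(* Defs.v *)
(* classical reals. The Euclidean space E is modelled as R^n,
   vectors being functions Fin.t n -> R with the standard inner product. *)
From Stdlib Require Import Reals Lra.
From Stdlib Require Fin.
Open Scope R_scope.

Definition Vec (n : nat) := Fin.t n -> R.

Fixpoint sumfin (n : nat) : (Fin.t n -> R) -> R :=
  match n return (Fin.t n -> R) -> R with
  | O => fun _ => 0
  | S m => fun g => g Fin.F1 + sumfin m (fun i => g (Fin.FS i))
  end.

Definition vadd {n} (x y : Vec n) : Vec n := fun i => x i + y i.
Definition vsub {n} (x y : Vec n) : Vec n := fun i => x i - y i.
Definition vscal {n} (t : R) (x : Vec n) : Vec n := fun i => t * x i.
Definition vzero {n} : Vec n := fun _ => 0.
Definition inner {n} (x y : Vec n) : R := sumfin n (fun i => x i * y i).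
Definition vnorm {n} (x : Vec n) : R := sqrt (inner x x).

Inductive Rbar := Fin (r : R) | PInf | MInf.

Definition is_liminf_0plus (phi : R -> R) (l : Rbar) : Prop :=
  match l with
  | Fin a =>
      (forall eps, 0 < eps -> exists d, 0 < d /\
         forall t, 0 < t < d -> a - eps < phi t) /\
      (forall eps, 0 < eps -> forall d, 0 < d ->
         exists t, 0 < t < d /\ phi t < a + eps)
  | PInf => forall M, exists d, 0 < d /\ forall t, 0 < t < d -> M < phi t
  | MInf => forall M d, 0 < d -> exists t, 0 < t < d /\ phi t < M
  end.

Definition dini {n} (f : Vec n -> R) (y u : Vec n) (l : Rbar) : Prop :=
  is_liminf_0plus (fun t => (f (vadd y (vscal t u)) - f y) / t) l.

Definition continuous_at {n} (f : Vec n -> R) (y : Vec n) : Prop :=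
  forall eps, 0 < eps -> exists d, 0 < d /\
    forall z, vnorm (vsub z y) < d -> Rabs (f z - f y) < eps.

Definition continuous_near {n} (f : Vec n -> R) (x : Vec n) : Prop :=
  exists r, 0 < r /\ forall y, vnorm (vsub y x) < r -> continuous_at f y.

(* l-stability at x (both Dini derivatives are required to be finite) *)
Definition l_stable {n} (f : Vec n -> R) (x : Vec n) : Prop :=
  exists r K, 0 < r /\ 0 < K /\
    forall y u, vnorm (vsub y x) < r ->
      exists a b, dini f y u (Fin a) /\ dini f x u (Fin b) /\
        Rabs (a - b) <= K * vnorm (vsub y x) * vnorm u.

Definition strongly_pseudoconvex {n} (f : Vec n -> R) (x : Vec n) : Prop :=
  forall u, vnorm u = 1 -> dini f x u (Fin 0) ->
    exists d alpha, 0 < d /\ 0 < alpha /\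
      forall t, 0 < t < d -> f (vadd x (vscal t u)) >= f x + alpha * t ^ 2.

Definition isolated_min_2 {n} (f : Vec n -> R) (xb : Vec n) : Prop :=
  exists r C, 0 < r /\ 0 < C /\
    forall x, vnorm (vsub x xb) < r -> x <> xb ->
      f x > f xb + C * vnorm (vsub x xb) ^ 2.

Definition frechet_grad {n} (f : Vec n -> R) (x g : Vec n) : Prop :=
  forall eps, 0 < eps -> exists d, 0 < d /\
    forall y, vnorm (vsub y x) < d ->
      Rabs (f y - f x - inner g (vsub y x)) <= eps * vnorm (vsub y x).

(* Main.v *)
Require Import Defs.
From Stdlib Require Import ZArith Reals Lra Lia Psatz Rtopology FunctionalExtensionality ClassicalEpsilon Classical.
From Stdlib Require Fin.
Open Scope R_scope.

Lemma sumfin_ext n (F G : Fin.t n -> R) : (forall i, F i = G i) -> sumfin n F = sumfin n G.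
Proof. induction n; simpl; intros H; [reflexivity|]. rewrite H, (IHn _ (fun i => G (Fin.FS i))); auto. Qed.

Lemma sumfin_plus n (F G : Fin.t n -> R) : sumfin n (fun i => F i + G i) = sumfin n F + sumfin n G.
Proof. induction n; simpl; [lra|]. rewrite (IHn (fun i => F (Fin.FS i)) (fun i => G (Fin.FS i))). lra. Qed.

Lemma sumfin_scal n c (F : Fin.t n -> R) : sumfin n (fun i => c * F i) = c * sumfin n F.
Proof. induction n; simpl; [lra|]. rewrite (IHn (fun i => F (Fin.FS i))). lra. Qed.

Lemma sumfin_zero n : sumfin n (fun _ => 0) = 0.
Proof. induction n; simpl; [lra|]. rewrite IHn. lra. Qed.

Lemma sumfin_nonneg n (F : Fin.t n -> R) : (forall i, 0 <= F i) -> 0 <= sumfin n F.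
Proof. induction n; simpl; intros H; [lra|]. assert (0 <= sumfin n (fun i => F (Fin.FS i))) by (apply IHn; intros; apply H). specialize (H Fin.F1). lra. Qed.

Lemma inner_nonneg n (v : Vec n) : 0 <= inner v v.
Proof. unfold inner. apply sumfin_nonneg. intros; nra. Qed.

Lemma vnorm_nonneg n (v : Vec n) : 0 <= vnorm v.
Proof. apply sqrt_pos. Qed.

Lemma inner_S n (a b : Vec (S n)) : inner a b = a Fin.F1 * b Fin.F1 + inner (fun i => a (Fin.FS i)) (fun i => b (Fin.FS i)).
Proof. reflexivity. Qed.

Lemma coord_le n (v : Vec n) i : (v i)^2 <= inner v v.
Proof.
  induction n.
  - inversion i.
  - rewrite inner_S. pattern i. apply Fin.caseS'.
    + pose proof (inner_nonneg _ (fun i => v (Fin.FS i))). nra.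
    + intros p. pose proof (IHn (fun i => v (Fin.FS i)) p). simpl in H. nra.
Qed.

Lemma cauchy_schwarz n (a b : Vec n) : (inner a b)^2 <= inner a a * inner b b.
Proof.
  induction n.
  - unfold inner; simpl; lra.
  - rewrite !inner_S.
    specialize (IHn (fun i => a (Fin.FS i)) (fun i => b (Fin.FS i))).
    set (S := inner (fun i => a (Fin.FS i)) (fun i => b (Fin.FS i))) in *.
    set (A := inner (fun i => a (Fin.FS i)) (fun i => a (Fin.FS i))) in *.
    set (B := inner (fun i => b (Fin.FS i)) (fun i => b (Fin.FS i))) in *.
    assert (HA : 0 <= A) by apply inner_nonneg.
    assert (HB : 0 <= B) by apply inner_nonneg.
    set (a0 := a Fin.F1). set (b0 := b Fin.F1).
    assert (Hk : 2 * a0 * b0 * S <= a0^2 * B + b0^2 * A).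
    { assert (Hsq: Rabs S <= sqrt A * sqrt B).
      { rewrite <- sqrt_mult_alt by lra. rewrite <- sqrt_Rsqr_abs. apply sqrt_le_1_alt. unfold Rsqr. nra. }
      pose proof (sqrt_sqrt A HA) as E1. pose proof (sqrt_sqrt B HB) as E2.
      pose proof (sqrt_pos A) as P1. pose proof (sqrt_pos B) as P2.
      pose proof (Rle_abs (a0*b0*S)) as L1. rewrite !Rabs_mult in L1.
      pose proof (Rabs_pos a0) as Q1. pose proof (Rabs_pos b0) as Q2. pose proof (Rabs_pos S) as Q3.
      assert (L2 : 2 * a0 * b0 * S <= 2 * (Rabs a0 * Rabs b0) * (sqrt A * sqrt B)).
      { assert (0 <= Rabs a0 * Rabs b0) by (apply Rmult_le_pos; auto). nra. }
      assert (L3 : 0 <= (Rabs a0 * sqrt B - Rabs b0 * sqrt A)^2) by apply pow2_ge_0.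
      assert (L4 : Rabs a0 ^2 = a0^2) by (rewrite <- (pow2_abs a0); reflexivity).
      assert (L5 : Rabs b0 ^2 = b0^2) by (rewrite <- (pow2_abs b0); reflexivity).
      nra. }
    nra.
Qed.

Lemma inner_sym n (a b : Vec n) : inner a b = inner b a.
Proof. unfold inner. apply sumfin_ext. intros; lra. Qed.

Lemma inner_add_self n (a b : Vec n) : inner (vadd a b) (vadd a b) = inner a a + 2 * inner a b + inner b b.
Proof.
  unfold inner, vadd.
  rewrite (sumfin_ext _ _ (fun i => a i * a i + (2 * (a i * b i) + b i * b i))) by (intros; ring).
  rewrite sumfin_plus, sumfin_plus, sumfin_scal. ring.
Qed.

Lemma inner_scal n c (a : Vec n) : inner (vscal c a) (vscal c a) = c^2 * inner a a.
Proof. unfold inner, vscal. rewrite <- sumfin_scal. apply sumfin_ext; intros; ring. Qed.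

Lemma vnorm_scal n c (a : Vec n) : vnorm (vscal c a) = Rabs c * vnorm a.
Proof. unfold vnorm. rewrite inner_scal. rewrite sqrt_mult_alt by nra. f_equal.
  rewrite <- sqrt_Rsqr_abs. unfold Rsqr. f_equal. ring. Qed.

Lemma vnorm_triangle n (a b : Vec n) : vnorm (vadd a b) <= vnorm a + vnorm b.
Proof.
  unfold vnorm. rewrite inner_add_self.
  pose proof (cauchy_schwarz _ a b). pose proof (inner_nonneg _ a). pose proof (inner_nonneg _ b).
  pose proof (sqrt_sqrt _ H0). pose proof (sqrt_sqrt _ H1). pose proof (sqrt_pos (inner a a)). pose proof (sqrt_pos (inner b b)).
  assert (inner a b <= sqrt (inner a a) * sqrt (inner b b)).
  { destruct (Rle_dec (inner a b) 0). nra.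
    assert (E : (sqrt (inner a a) * sqrt (inner b b))^2 = inner a a * inner b b).
    { rewrite Rpow_mult_distr, !pow2_sqrt; auto. }
    set (s := sqrt (inner a a) * sqrt (inner b b)) in *.
    assert (0 <= s) by (apply Rmult_le_pos; auto).
    destruct (Rle_dec (inner a b) s); auto.
    assert (s^2 < inner a b ^2). { simpl; nra. } lra. }
  rewrite <- (sqrt_Rsqr (sqrt (inner a a) + sqrt (inner b b))) by lra.
  apply sqrt_le_1_alt. unfold Rsqr. nra.
Qed.

Lemma vnorm_coord n (v : Vec n) i : Rabs (v i) <= vnorm v.
Proof. rewrite <- sqrt_Rsqr_abs. apply sqrt_le_1_alt. pose proof (coord_le _ v i). unfold Rsqr. nra. Qed.

Lemma vnorm_zero n (v : Vec n) : vnorm v = 0 -> v = vzero.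
Proof. intros H. apply functional_extensionality. intros i. unfold vzero.
  pose proof (vnorm_coord _ v i). pose proof (Rabs_pos (v i)). assert (Rabs (v i) = 0) by lra.
  destruct (Req_dec (v i) 0); auto. apply Rabs_no_R0 in H3. lra. Qed.

Lemma vnorm_vzero n : vnorm (@vzero n) = 0.
Proof. unfold vnorm, inner, vzero. rewrite (sumfin_ext _ _ (fun _ => 0)) by (intros; ring). rewrite sumfin_zero. apply sqrt_0. Qed.

Lemma vnorm_S n (v : Vec (S n)) : vnorm v <= Rabs (v Fin.F1) + vnorm (fun i => v (Fin.FS i)).
Proof.
  unfold vnorm. rewrite inner_S. pose proof (inner_nonneg _ (fun i => v (Fin.FS i))).
  set (A := inner _ _) in *. pose proof (sqrt_sqrt _ H). pose proof (sqrt_pos A). pose proof (Rabs_pos (v Fin.F1)).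
  rewrite <- (sqrt_Rsqr (Rabs (v Fin.F1) + sqrt A)) by lra. apply sqrt_le_1_alt. unfold Rsqr.
  assert (Rabs (v Fin.F1) * Rabs (v Fin.F1) = v Fin.F1 * v Fin.F1) by (rewrite <- Rabs_mult; apply Rabs_right; nra).
  nra.
Qed.
Definition ev {n} (i : Fin.t n) : Vec n := fun j => if Fin.eq_dec i j then 1 else 0.

Lemma ev_FS n (i j : Fin.t n) : ev (Fin.FS i) (Fin.FS j) = ev i j.
Proof. unfold ev. destruct (Fin.eq_dec (Fin.FS i) (Fin.FS j)) as [e|e]; destruct (Fin.eq_dec i j) as [e'|e']; auto.
  - apply Fin.FS_inj in e. contradiction.
  - subst. contradiction. Qed.

Lemma ev_FS_F1 n (i : Fin.t n) : ev (Fin.FS i) Fin.F1 = 0.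
Proof. unfold ev. destruct (Fin.eq_dec (Fin.FS i) Fin.F1) as [e|e]; auto. inversion e. Qed.
Lemma ev_F1_FS n (i : Fin.t n) : ev Fin.F1 (Fin.FS i) = 0.
Proof. unfold ev. destruct (Fin.eq_dec Fin.F1 (Fin.FS i)) as [e|e]; auto. inversion e. Qed.
Lemma ev_F1_F1 n : ev (@Fin.F1 n) Fin.F1 = 1.
Proof. unfold ev. destruct (Fin.eq_dec (@Fin.F1 n) Fin.F1) as [e|e]; auto. contradiction. Qed.

Lemma delta_sum n (c : Fin.t n -> R) j : sumfin n (fun i => c i * ev i j) = c j.
Proof.
  induction n.
  - inversion j.
  - simpl. pattern j. apply Fin.caseS'.
    + rewrite ev_F1_F1. rewrite (sumfin_ext _ _ (fun _ => 0)) by (intros; rewrite ev_FS_F1; ring).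
      rewrite sumfin_zero. ring.
    + intros p. rewrite ev_F1_FS. rewrite (sumfin_ext _ _ (fun i => c (Fin.FS i) * ev i p)) by (intros; rewrite ev_FS; ring).
      rewrite IHn. ring.
Qed.

Definition vsumfin {m} n (F : Fin.t n -> Vec m) : Vec m := fun j => sumfin n (fun i => F i j).

Lemma lin_vsum m (L : Vec m -> R) : (forall a b, L (vadd a b) = L a + L b) -> L vzero = 0 ->
  forall n (F : Fin.t n -> Vec m), L (vsumfin n F) = sumfin n (fun i => L (F i)).
Proof.
  intros Hadd H0. induction n; intros F.
  - simpl. exact H0.
  - simpl. change (vsumfin (S n) F) with (vadd (F Fin.F1) (vsumfin n (fun i => F (Fin.FS i)))).
    rewrite Hadd, IHn. reflexivity.
Qed.

Lemma lin_repr n (L : Vec n -> R) : (forall a b, L (vadd a b) = L a + L b) ->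
  (forall c a, L (vscal c a) = c * L a) -> forall v, L v = inner (fun i => L (ev i)) v.
Proof.
  intros Hadd Hs v.
  assert (H0 : L vzero = 0). { replace (@vzero n) with (vscal 0 (@vzero n)). rewrite Hs; ring.
    apply functional_extensionality; intros; unfold vscal, vzero; ring. }
  assert (Ev : v = vsumfin n (fun i => vscal (v i) (ev i))).
  { apply functional_extensionality; intros j. unfold vsumfin, vscal. rewrite delta_sum. reflexivity. }
  rewrite Ev at 1. rewrite lin_vsum by auto. unfold inner. apply sumfin_ext. intros i. rewrite Hs. ring.
Qed.

Lemma inner_zero_l n (v : Vec n) : inner vzero v = 0.
Proof. unfold inner, vzero. rewrite (sumfin_ext _ _ (fun _ => 0)) by (intros; ring). apply sumfin_zero. Qed.

Definition rcont (psi : R -> R) (t : R) := forall eps, 0 < eps -> exists d, 0 < d /\ forall t', Rabs (t' - t) < d -> Rabs (psi t' - psi t) < eps.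

Lemma mono_lemma (psi : R -> R) (s : R) : 0 <= s -> (forall t, 0 <= t <= s -> rcont psi t) ->
  (forall t, 0 <= t < s -> forall d, 0 < d -> exists tau, 0 < tau < d /\ psi t < psi (t + tau)) ->
  psi 0 <= psi s.
Proof.
  intros Hs Hc Hd.
  set (E := fun t => 0 <= t <= s /\ psi 0 <= psi t).
  assert (Eb : bound E) by (exists s; intros t [Ht _]; lra).
  assert (Ee : exists t, E t) by (exists 0; split; lra).
  destruct (completeness E Eb Ee) as [c [Hub Hlub]].
  assert (c0 : 0 <= c) by (apply Hub; split; lra).
  assert (cs : c <= s) by (apply Hlub; intros t [Ht _]; lra).
  assert (Pc : psi 0 <= psi c).
  { destruct (Rle_dec (psi 0) (psi c)) as [r|r]; auto. exfalso.
    destruct (Hc c (conj c0 cs) (psi 0 - psi c)) as [d [dp Hd']]; [lra|].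
    assert (exists t, E t /\ c - d < t).
    { apply not_all_not_ex. intros Hn. assert (c <= c - d); [|lra].
      apply Hlub. intros t Et. destruct (Rle_dec t (c - d)); auto. exfalso. apply (Hn t). split; auto; lra. }
    destruct H as [t [[Ht1 Ht2] Ht3]]. assert (t <= c) by (apply Hub; split; auto).
    assert (Rabs (t - c) < d) by (apply Rabs_def1; lra).
    specialize (Hd' t H0). apply Rabs_def2 in Hd'. lra. }
  destruct (Req_dec c s) as [e|ne]. { subst; auto. }
  assert (cs' : c < s) by (destruct cs; auto; contradiction).
  exfalso. destruct (Hd c (conj c0 cs') (s - c) ltac:(lra)) as [tau [Ht Hp]].
  assert (c + tau <= c) by (apply Hub; split; [lra| lra]). lra.
Qed.
Definition incr (phi : nat -> nat) := forall k, (phi k < phi (S k))%nat.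

Lemma incr_ge phi : incr phi -> forall k, (k <= phi k)%nat.
Proof. intros H k. induction k; [lia|]. specialize (H k). lia. Qed.

Lemma incr_mono phi : incr phi -> forall a b, (a <= b)%nat -> (phi a <= phi b)%nat.
Proof. intros H a b Hab. induction Hab; auto. specialize (H m). lia. Qed.

Lemma incr_strict phi : incr phi -> forall a b, (a < b)%nat -> (phi a < phi b)%nat.
Proof. intros H a b Hab. induction Hab. apply H. specialize (H m). lia. Qed.

Lemma BW1 (u : nat -> R) M : (forall k, Rabs (u k) <= M) ->
  exists phi l, incr phi /\ forall eps, 0 < eps -> exists N, forall k, (N <= k)%nat -> Rabs (u (phi k) - l) < eps.
Proof.
  intros Hb.
  destruct (Bolzano_Weierstrass u (fun c => -M <= c <= M) (compact_P3 _ _)) as [l Hl].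
  { intros k. specialize (Hb k). pose proof (Rle_abs (u k)). pose proof (Rle_abs (- u k)). rewrite Rabs_Ropp in H0. lra. }
  assert (H : forall N k : nat, exists p, (N <= p)%nat /\ Rabs (u p - l) < / (INR k + 1)).
  { intros N k. assert (pos : 0 < / (INR k + 1)). { apply Rinv_0_lt_compat. pose proof (pos_INR k). lra. }
    destruct (Hl (disc l (mkposreal _ pos)) N) as [p [Hp1 Hp2]].
    { exists (mkposreal _ pos). intros y Hy; exact Hy. }
    exists p. split; auto. }
  set (G := fun N k => proj1_sig (constructive_indefinite_description _ (H N k))).
  assert (HG : forall N k, (N <= G N k)%nat /\ Rabs (u (G N k) - l) < / (INR k + 1)).
  { intros N k. unfold G. destruct (constructive_indefinite_description _ _). simpl. auto. }
  set (phi := fix phi k := match k with O => G O O | S k' => G (S (phi k')) (S k') end).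
  exists phi, l. split.
  - intros k. simpl. destruct (HG (S (phi k)) (S k)). lia.
  - intros eps Heps. destruct (archimed (/ eps)) as [Ha _].
    assert (0 < / eps) by (apply Rinv_0_lt_compat; lra).
    destruct (Z.le_gt_cases 0 (up (/ eps))) as [z|z]; [|exfalso; apply IZR_lt in z; lra].
    exists (Z.to_nat (up (/ eps))). intros k Hk.
    assert (Hphi : Rabs (u (phi k) - l) < / (INR k + 1)) by (destruct k; simpl; apply HG).
    eapply Rlt_le_trans; [exact Hphi|].
    assert (INR (Z.to_nat (up (/ eps))) <= INR k) by (apply le_INR; auto).
    rewrite INR_IZR_INZ, Z2Nat.id in H1 by auto.
    assert (/ eps < INR k + 1) by lra.
    rewrite <- (Rinv_inv eps). apply Rlt_le. apply Rinv_lt_contravar; auto.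
    apply Rmult_lt_0_compat; auto. pose proof (pos_INR k); lra.
Qed.

Lemma vnorm_0dim (v : Vec 0) : vnorm v = 0.
Proof. unfold vnorm, inner. simpl. apply sqrt_0. Qed.

Lemma BWn n M : forall (u : nat -> Vec n), (forall k i, Rabs (u k i) <= M) ->
  exists phi c, incr phi /\ forall eps, 0 < eps -> exists N, forall k, (N <= k)%nat -> vnorm (vsub (u (phi k)) c) < eps.
Proof.
  induction n; intros u Hb.
  - exists (fun k => k), vzero. split. intros k; lia. intros eps He. exists O. intros. rewrite vnorm_0dim. auto.
  - destruct (IHn (fun k i => u k (Fin.FS i))) as [phi1 [c' [Hi1 Hc1]]]. { intros; apply Hb. }
    destruct (BW1 (fun k => u (phi1 k) Fin.F1) M) as [phi2 [l [Hi2 Hc2]]]. { intros; apply Hb. }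
    exists (fun k => phi1 (phi2 k)), (fun i => Fin.caseS' i (fun _ => R) l c'). split.
    + intros k. apply incr_strict; auto.
    + intros eps He. destruct (Hc1 (eps/2)) as [N1 HN1]; [lra|]. destruct (Hc2 (eps/2)) as [N2 HN2]; [lra|].
      exists (max N1 N2). intros k Hk.
      eapply Rle_lt_trans; [apply vnorm_S|]. simpl.
      specialize (HN2 k ltac:(lia)). simpl in HN2.
      assert (k <= phi2 k)%nat by (apply incr_ge; auto).
      specialize (HN1 (phi2 k) ltac:(lia)). unfold vsub in HN1 |- *. simpl. lra.
Qed.
Lemma abs_split a b : Rabs a <= b -> -b <= a <= b.
Proof. intros H. pose proof (Rle_abs a). pose proof (Rle_abs (-a)). rewrite Rabs_Ropp in H1. lra. Qed.

Lemma eps_le a b : (forall eps, 0 < eps -> a <= b + eps) -> a <= b.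
Proof. intros H. destruct (Rle_dec a b); auto. specialize (H ((a-b)/2)). lra. Qed.

Lemma dini_unique n (f : Vec n -> R) y u a b : dini f y u (Fin a) -> dini f y u (Fin b) -> a = b.
Proof.
  intros [Ha1 Ha2] [Hb1 Hb2].
  destruct (Rtotal_order a b) as [l|[e|l]]; auto; exfalso.
  - destruct (Hb1 ((b-a)/2)) as [d [dp Hd]]; [lra|]. destruct (Ha2 ((b-a)/2) ltac:(lra) d dp) as [t [Ht1 Ht2]].
    specialize (Hd t Ht1). lra.
  - destruct (Ha1 ((a-b)/2)) as [d [dp Hd]]; [lra|]. destruct (Hb2 ((a-b)/2) ltac:(lra) d dp) as [t [Ht1 Ht2]].
    specialize (Hd t Ht1). lra.
Qed.

Lemma vscal_scal n t c (v : Vec n) : vscal t (vscal c v) = vscal (c*t) v.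
Proof. apply functional_extensionality; intros; unfold vscal; ring. Qed.

Lemma dini_scal n (f : Vec n -> R) y v b c : 0 < c -> dini f y v (Fin b) -> dini f y (vscal c v) (Fin (c*b)).
Proof.
  intros Hc [H1 H2]. unfold dini, is_liminf_0plus in *. split.
  - intros eps He. destruct (H1 (eps/c)) as [d [dp Hd]]. { apply Rdiv_lt_0_compat; auto. }
    exists (d/c). split. { apply Rdiv_lt_0_compat; auto. }
    intros t Ht. rewrite vscal_scal. assert (0 < c*t < d).
    { split. nra. destruct Ht. apply (Rmult_lt_compat_l c) in H0; auto. field_simplify in H0; lra. }
    specialize (Hd _ H). 
    replace ((f (vadd y (vscal (c * t) v)) - f y) / t) with (c * ((f (vadd y (vscal (c * t) v)) - f y) / (c * t))) by (field; lra).
    replace (c*b - eps) with (c * (b - eps/c)) by (field; lra). apply Rmult_lt_compat_l; auto.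
  - intros eps He d dp. destruct (H2 (eps/c) ltac:(apply Rdiv_lt_0_compat; auto) (c*d) ltac:(nra)) as [t [Ht1 Ht2]].
    exists (t/c). split. { split. apply Rdiv_lt_0_compat; lra. destruct Ht1.
      apply (Rmult_lt_reg_l c); auto. field_simplify; lra. }
    rewrite vscal_scal. replace (c * (t/c)) with t by (field; lra).
    replace ((f (vadd y (vscal t v)) - f y) / (t / c)) with (c * ((f (vadd y (vscal t v)) - f y) / t)) by (field; lra).
    replace (c*b + eps) with (c * (b + eps/c)) by (field; lra). apply Rmult_lt_compat_l; auto.
Qed.

Lemma vadd_scal_scal n (y w : Vec n) t tau : vadd (vadd y (vscal t w)) (vscal tau w) = vadd y (vscal (t+tau) w).
Proof. apply functional_extensionality; intros; unfold vadd, vscal; ring. Qed.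

Lemma dist_seg n (y w x : Vec n) t : 0 <= t <= 1 -> vnorm (vsub (vadd y (vscal t w)) x) <= vnorm (vsub y x) + vnorm w.
Proof.
  intros Ht. replace (vsub (vadd y (vscal t w)) x) with (vadd (vsub y x) (vscal t w))
    by (apply functional_extensionality; intros; unfold vadd, vsub, vscal; ring).
  eapply Rle_trans; [apply vnorm_triangle|]. rewrite vnorm_scal, Rabs_right by lra.
  pose proof (vnorm_nonneg _ w). nra.
Qed.

Lemma SL n (f : Vec n -> R) (x : Vec n) (h : Vec n -> R) r1 K :
  (forall u, dini f x u (Fin (h u))) ->
  (forall y u, vnorm (vsub y x) < r1 -> exists a b, dini f y u (Fin a) /\ dini f x u (Fin b) /\
        Rabs (a - b) <= K * vnorm (vsub y x) * vnorm u) ->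
  forall y w eps, vnorm (vsub y x) < r1 -> 0 < eps -> forall d, 0 < d ->
   (exists tau, 0 < tau < d /\ h w - K * vnorm (vsub y x) * vnorm w - eps < (f (vadd y (vscal tau w)) - f y) / tau) /\
   (exists tau, 0 < tau < d /\ (f (vadd y (vscal tau w)) - f y) / tau < h w + K * vnorm (vsub y x) * vnorm w + eps).
Proof.
  intros Hh Hst y w eps Hy He d Hd.
  destruct (Hst y w Hy) as [a [b [Ha [Hb Hab]]]].
  pose proof (dini_unique _ _ _ _ _ _ Hb (Hh w)). subst b.
  apply abs_split in Hab.
  destruct Ha as [H1 H2]. split.
  - destruct (H1 eps He) as [d0 [d0p Hd0]]. exists (Rmin d d0 / 2).
    assert (0 < Rmin d d0) by (apply Rmin_glb_lt; auto).
    assert (Rmin d d0 <= d) by apply Rmin_l. assert (Rmin d d0 <= d0) by apply Rmin_r.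
    split. lra. specialize (Hd0 (Rmin d d0 / 2) ltac:(lra)). lra.
  - destruct (H2 eps He d Hd) as [t [Ht1 Ht2]]. exists t. split; auto. lra.
Qed.
Lemma rcont_affine (phi : R -> R) t a c : rcont phi t -> rcont (fun s => a * phi s + c * s) t.
Proof.
  intros H e He. destruct (H (e / (2 * (Rabs a + 1)))) as [d [dp Hd]].
  { pose proof (Rabs_pos a). apply Rdiv_lt_0_compat; lra. }
  exists (Rmin d (e / (2 * (Rabs c + 1)))). split.
  { pose proof (Rabs_pos c). apply Rmin_glb_lt; auto. apply Rdiv_lt_0_compat; lra. }
  intros t' Ht'. pose proof (Rmin_l d (e / (2 * (Rabs c + 1)))). pose proof (Rmin_r d (e / (2 * (Rabs c + 1)))).
  specialize (Hd t' ltac:(lra)).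
  replace (a * phi t' + c * t' - (a * phi t + c * t)) with (a * (phi t' - phi t) + c * (t' - t)) by ring.
  eapply Rle_lt_trans; [apply Rabs_triang|]. rewrite !Rabs_mult.
  pose proof (Rabs_pos a). pose proof (Rabs_pos c). pose proof (Rabs_pos (phi t' - phi t)). pose proof (Rabs_pos (t'-t)).
  assert (Rabs a * Rabs (phi t' - phi t) < e/2).
  { assert (Rabs (phi t' - phi t) * (2 * (Rabs a + 1)) < e).
    { apply (Rmult_lt_compat_r (2 * (Rabs a + 1))) in Hd; [|lra]. field_simplify in Hd; lra. }
    nra. }
  assert (Rabs c * Rabs (t' - t) < e/2).
  { assert (Rabs (t' - t) * (2 * (Rabs c + 1)) < e).
    { assert (Rabs (t'-t) < e / (2 * (Rabs c + 1))) by lra.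
      apply (Rmult_lt_compat_r (2 * (Rabs c + 1))) in H7; [|lra]. field_simplify in H7; lra. }
    nra. }
  lra.
Qed.

Lemma quot_lt A tau m : 0 < tau -> m < A / tau -> m * tau < A.
Proof. intros Ht H. apply (Rmult_lt_compat_r tau) in H; auto. field_simplify in H; lra. Qed.
Lemma quot_gt A tau m : 0 < tau -> A / tau < m -> A < m * tau.
Proof. intros Ht H. apply (Rmult_lt_compat_r tau) in H; auto. field_simplify in H; lra. Qed.

Lemma SEG n (f : Vec n -> R) (x : Vec n) (h : Vec n -> R) r1 r2 K rho :
  (forall u, dini f x u (Fin (h u))) ->
  (forall y u, vnorm (vsub y x) < r1 -> exists a b, dini f y u (Fin a) /\ dini f x u (Fin b) /\
        Rabs (a - b) <= K * vnorm (vsub y x) * vnorm u) ->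
  (forall y, vnorm (vsub y x) < r2 -> continuous_at f y) ->
  0 <= K -> rho <= r1 -> rho <= r2 ->
  forall y w, vnorm (vsub y x) + vnorm w < rho ->
  Rabs (f (vadd y w) - f y - h w) <= K * (vnorm (vsub y x) + vnorm w) * vnorm w.
Proof.
  intros Hh Hst Hc HK H1 H2 y w Hyw.
  set (Rr := vnorm (vsub y x) + vnorm w) in *.
  set (phi := fun t => f (vadd y (vscal t w))).
  pose proof (vnorm_nonneg _ w) as Nw.
  assert (HR : forall t, 0 <= t <= 1 -> vnorm (vsub (vadd y (vscal t w)) x) <= Rr) by (intros; apply dist_seg; auto).
  assert (Hcont : forall t, 0 <= t <= 1 -> rcont phi t).
  { intros t Ht e He. specialize (HR t Ht).
    destruct (Hc (vadd y (vscal t w)) ltac:(lra) e He) as [d [dp Hd]].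
    exists (d / (vnorm w + 1)). split. { apply Rdiv_lt_0_compat; lra. }
    intros t' Ht'. unfold phi. apply Hd.
    replace (vsub (vadd y (vscal t' w)) (vadd y (vscal t w))) with (vscal (t' - t) w)
      by (apply functional_extensionality; intros; unfold vadd, vsub, vscal; ring).
    rewrite vnorm_scal. pose proof (Rabs_pos (t'-t)).
    assert (Rabs (t'-t) * (vnorm w + 1) < d).
    { apply (Rmult_lt_compat_r (vnorm w + 1)) in Ht'; [|lra]. field_simplify in Ht'; lra. }
    nra. }
  assert (P0 : phi 0 = f y). { unfold phi. f_equal. apply functional_extensionality; intros; unfold vadd, vscal; ring. }
  assert (P1 : phi 1 = f (vadd y w)). { unfold phi. f_equal. apply functional_extensionality; intros; unfold vadd, vscal; ring. }
  assert (Hstep : forall t tau, phi (t + tau) = f (vadd (vadd y (vscal t w)) (vscal tau w))).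
  { intros. unfold phi. rewrite vadd_scal_scal. reflexivity. }
  assert (Low : forall eps, 0 < eps -> h w - K * Rr * vnorm w - eps <= phi 1 - phi 0).
  { intros eps He. set (m := h w - K * Rr * vnorm w - eps).
    pose proof (mono_lemma (fun s => 1 * phi s + (- m) * s) 1 ltac:(lra)) as M.
    assert (phi 0 - m * 0 <= phi 1 - m * 1); [|lra].
    replace (phi 0 - m * 0) with (1 * phi 0 + - m * 0) by ring.
    replace (phi 1 - m * 1) with (1 * phi 1 + - m * 1) by ring.
    apply M.
    - intros t Ht. apply rcont_affine. auto.
    - intros t Ht d Hd. assert (Ht' : 0 <= t <= 1) by lra. specialize (HR t Ht').
      destruct (SL n f x h r1 K Hh Hst (vadd y (vscal t w)) w eps ltac:(lra) He d Hd) as [[tau [Htau Hq]] _].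
      exists tau. split; auto. rewrite Hstep. unfold phi.
      assert (K * vnorm (vsub (vadd y (vscal t w)) x) * vnorm w <= K * Rr * vnorm w).
      { apply Rmult_le_compat_r; auto. apply Rmult_le_compat_l; auto. }
      apply quot_lt in Hq; [|lra].
      assert (K * vnorm (vsub (vadd y (vscal t w)) x) * vnorm w * tau <= K * Rr * vnorm w * tau) by (apply Rmult_le_compat_r; lra).
      unfold m. lra. }
  assert (Up : forall eps, 0 < eps -> phi 1 - phi 0 <= h w + K * Rr * vnorm w + eps).
  { intros eps He. set (m := h w + K * Rr * vnorm w + eps).
    pose proof (mono_lemma (fun s => (-1) * phi s + m * s) 1 ltac:(lra)) as M.
    assert (- phi 0 + m * 0 <= - phi 1 + m * 1); [|lra].
    replace (- phi 0 + m * 0) with (-1 * phi 0 + m * 0) by ring.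
    replace (- phi 1 + m * 1) with (-1 * phi 1 + m * 1) by ring.
    apply M.
    - intros t Ht. apply rcont_affine. auto.
    - intros t Ht d Hd. assert (Ht' : 0 <= t <= 1) by lra. specialize (HR t Ht').
      destruct (SL n f x h r1 K Hh Hst (vadd y (vscal t w)) w eps ltac:(lra) He d Hd) as [_ [tau [Htau Hq]]].
      exists tau. split; auto. rewrite Hstep. unfold phi.
      assert (K * vnorm (vsub (vadd y (vscal t w)) x) * vnorm w <= K * Rr * vnorm w).
      { apply Rmult_le_compat_r; auto. apply Rmult_le_compat_l; auto. }
      apply quot_gt in Hq; [|lra].
      assert (K * vnorm (vsub (vadd y (vscal t w)) x) * vnorm w * tau <= K * Rr * vnorm w * tau) by (apply Rmult_le_compat_r; lra).
      unfold m. lra. }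
  apply Rabs_le. rewrite <- P0, <- P1. split.
  - assert (h w - K * Rr * vnorm w <= phi 1 - phi 0); [|lra].
    apply eps_le. intros. specialize (Low eps H). lra.
  - assert (phi 1 - phi 0 <= h w + K * Rr * vnorm w); [|lra]. apply eps_le. auto.
Qed.
Lemma small_le a C d : 0 < d -> (forall t, 0 < t < d -> a <= t * C) -> a <= 0.
Proof.
  intros Hd H. destruct (Rle_dec a 0); auto. exfalso.
  set (t := Rmin (d/2) (a / (2 * (Rabs C + 1)))).
  assert (Ht1 : t <= d/2) by apply Rmin_l. assert (Ht2 : t <= a / (2 * (Rabs C + 1))) by apply Rmin_r.
  pose proof (Rabs_pos C).
  assert (Ht0 : 0 < t). { apply Rmin_glb_lt. lra. apply Rdiv_lt_0_compat; lra. }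
  specialize (H t ltac:(lra)).
  assert (t * (2 * (Rabs C + 1)) <= a).
  { apply (Rmult_le_compat_r (2 * (Rabs C + 1))) in Ht2; [|lra]. field_simplify in Ht2; lra. }
  pose proof (Rle_abs C). nra.
Qed.

Lemma small_zero a C d : 0 < d -> (forall t, 0 < t < d -> Rabs a <= t * C) -> a = 0.
Proof. intros Hd H. pose proof (small_le _ _ _ Hd H). pose proof (Rabs_pos a).
  destruct (Req_dec a 0); auto. apply Rabs_no_R0 in H2. lra. Qed.

Lemma inv_small eps : 0 < eps -> exists N, forall k, (N <= k)%nat -> / (INR k + 1) < eps.
Proof.
  intros Heps. destruct (archimed (/ eps)) as [Ha _].
  assert (0 < / eps) by (apply Rinv_0_lt_compat; lra).
  destruct (Z.le_gt_cases 0 (up (/ eps))) as [z|z]; [|exfalso; apply IZR_lt in z; lra].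
  exists (Z.to_nat (up (/ eps))). intros k Hk.
  assert (INR (Z.to_nat (up (/ eps))) <= INR k) by (apply le_INR; auto).
  rewrite INR_IZR_INZ, Z2Nat.id in H0 by auto.
  rewrite <- (Rinv_inv eps). apply Rinv_lt_contravar; auto.
  apply Rmult_lt_0_compat; auto. pose proof (pos_INR k); lra. lra.
Qed.

Lemma vsub_self n (x : Vec n) : vsub x x = vzero.
Proof. apply functional_extensionality; intros; unfold vsub, vzero; ring. Qed.

Lemma vnorm_sub_sym n (a b : Vec n) : vnorm (vsub a b) = vnorm (vsub b a).
Proof. replace (vsub a b) with (vscal (-1) (vsub b a)) by (apply functional_extensionality; intros; unfold vsub, vscal; ring).
  rewrite vnorm_scal. replace (Rabs (-1)) with 1. ring. rewrite Rabs_left by lra. ring. Qed.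
Theorem theorem3 (n : nat) (f : Vec n -> R) (xb : Vec n) :
  continuous_near f xb ->
  l_stable f xb ->
  strongly_pseudoconvex f xb ->
  (exists g : Vec n, frechet_grad f xb g) /\
  (isolated_min_2 f xb <-> frechet_grad f xb vzero).
Proof.
  intros [r2 [r2p Hc]] [r1 [K [r1p [Kp Hst]]]] Hspc.
  assert (Ex : forall u, exists b, dini f xb u (Fin b)).
  { intros u. destruct (Hst xb u) as [a [b [_ [Hb _]]]]. rewrite vsub_self, vnorm_vzero; auto. eauto. }
  set (h := fun u => proj1_sig (constructive_indefinite_description _ (Ex u))).
  assert (Hh : forall u, dini f xb u (Fin (h u))).
  { intros u. unfold h. destruct (constructive_indefinite_description _ _). auto. }
  clearbody h.
  set (rho := Rmin r1 r2).
  assert (rhop : 0 < rho) by (apply Rmin_glb_lt; auto).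
  assert (SG := SEG n f xb h r1 r2 K rho Hh Hst Hc ltac:(lra) (Rmin_l _ _) (Rmin_r _ _)).
  assert (SGx : forall v, vnorm v < rho -> Rabs (f (vadd xb v) - f xb - h v) <= K * vnorm v * vnorm v).
  { intros v Hv. pose proof (SG xb v). rewrite vsub_self, vnorm_vzero, Rplus_0_l in H. auto. }
  assert (hom : forall c v, 0 < c -> h (vscal c v) = c * h v).
  { intros c v Hcp. apply (dini_unique _ f xb (vscal c v)); auto. apply dini_scal; auto. }
  assert (h0 : h vzero = 0).
  { assert (h (vscal 2 vzero) = 2 * h vzero) by (apply hom; lra).
    replace (vscal 2 (@vzero n)) with (@vzero n) in H by (apply functional_extensionality; intros; unfold vscal, vzero; ring).
    lra. }
  assert (hadd : forall u v, h (vadd u v) = h u + h v).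
  { intros u v.
    assert (h (vadd u v) - h u - h v = 0); [|lra].
    pose proof (vnorm_nonneg _ u). pose proof (vnorm_nonneg _ v). pose proof (vnorm_nonneg _ (vadd u v)).
    set (Nu := vnorm u) in *. set (Nv := vnorm v) in *. set (Nuv := vnorm (vadd u v)) in *.
    apply (small_zero _ (K * Nuv * Nuv + K * Nu * Nu + K * (Nu + Nv) * Nv) (rho / (Nu + Nv + Nuv + 1))).
    { apply Rdiv_lt_0_compat; lra. }
    intros t [Ht0 Ht].
    assert (Htb : t * (Nu + Nv + Nuv + 1) < rho).
    { apply (Rmult_lt_compat_r (Nu + Nv + Nuv + 1)) in Ht; [|lra]. field_simplify in Ht; lra. }
    assert (A := SGx (vscal t (vadd u v))). rewrite vnorm_scal, Rabs_right, hom in A by lra.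
    assert (B := SGx (vscal t u)). rewrite vnorm_scal, Rabs_right, hom in B by lra.
    assert (C := SG (vadd xb (vscal t u)) (vscal t v)).
    replace (vsub (vadd xb (vscal t u)) xb) with (vscal t u) in C
      by (apply functional_extensionality; intros; unfold vsub, vadd, vscal; ring).
    replace (vadd (vadd xb (vscal t u)) (vscal t v)) with (vadd xb (vscal t (vadd u v))) in C
      by (apply functional_extensionality; intros; unfold vadd, vscal; ring).
    rewrite !vnorm_scal, !Rabs_right, hom in C by lra.
    fold Nu Nv Nuv in A, B, C.
    specialize (A ltac:(nra)). specialize (B ltac:(nra)). specialize (C ltac:(nra)).
    apply abs_split in A. apply abs_split in B. apply abs_split in C.
    assert (Rabs (t * (h (vadd u v) - h u - h v)) <= t * (t * (K * Nuv * Nuv + K * Nu * Nu + K * (Nu + Nv) * Nv))).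
    { apply Rabs_le. split; nra. }
    rewrite Rabs_mult, Rabs_right in H2 by lra.
    apply (Rmult_le_reg_l t); auto. }
  assert (hneg : forall v, h (vscal (-1) v) = - h v).
  { intros v. pose proof (hadd v (vscal (-1) v)).
    replace (vadd v (vscal (-1) v)) with (@vzero n) in H by (apply functional_extensionality; intros; unfold vadd, vscal, vzero; ring).
    lra. }
  assert (hsc : forall c v, h (vscal c v) = c * h v).
  { intros c v. destruct (Rtotal_order c 0) as [l|[e|l]].
    - replace (vscal c v) with (vscal (-1) (vscal (-c) v)) by (apply functional_extensionality; intros; unfold vscal; ring).
      rewrite hneg, hom by lra. ring.
    - subst. replace (vscal 0 v) with (@vzero n) by (apply functional_extensionality; intros; unfold vscal, vzero; ring).
      rewrite h0. ring.
    - apply hom; auto. }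
  assert (Hrep := lin_repr n h hadd hsc).
  assert (Hfr : forall g', (forall v, inner g' v = h v) -> frechet_grad f xb g').
  { intros g' Hg' eps He. exists (Rmin rho (eps / K)). split.
    { apply Rmin_glb_lt; auto. apply Rdiv_lt_0_compat; auto. }
    intros y Hy. pose proof (Rmin_l rho (eps / K)). pose proof (Rmin_r rho (eps / K)).
    rewrite Hg'. pose proof (SGx (vsub y xb) ltac:(lra)).
    replace (vadd xb (vsub y xb)) with y in H1 by (apply functional_extensionality; intros; unfold vadd, vsub; ring).
    eapply Rle_trans; [exact H1|]. pose proof (vnorm_nonneg _ (vsub y xb)).
    assert (K * vnorm (vsub y xb) <= eps).
    { assert (vnorm (vsub y xb) < eps / K) by lra.
      apply (Rmult_lt_compat_l K) in H3; auto. field_simplify in H3; lra. }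
    nra. }
  split; [exists (fun i => h (ev i)); apply Hfr; intros; symmetry; apply Hrep|].
  split.
  -
    intros [r [C [rp [Cp Hmin]]]].
    assert (hz : forall v, 0 <= h v).
    { intros v. pose proof (vnorm_nonneg _ v).
      assert (- h v <= 0); [|lra].
      apply (small_le _ (K * vnorm v * vnorm v) (Rmin rho r / (vnorm v + 1))).
      { apply Rdiv_lt_0_compat; [apply Rmin_glb_lt|]; lra. }
      intros t [Ht0 Ht].
      assert (Htb : t * (vnorm v + 1) < Rmin rho r).
      { apply (Rmult_lt_compat_r (vnorm v + 1)) in Ht; [|lra]. field_simplify in Ht; lra. }
      pose proof (Rmin_l rho r). pose proof (Rmin_r rho r).
      assert (A := SGx (vscal t v)). rewrite vnorm_scal, Rabs_right, hom in A by lra.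
      specialize (A ltac:(nra)). apply abs_split in A.
      assert (f xb <= f (vadd xb (vscal t v))).
      { destruct (classic (vadd xb (vscal t v) = xb)) as [e|ne]. { rewrite e; lra. }
        specialize (Hmin (vadd xb (vscal t v))).
        replace (vsub (vadd xb (vscal t v)) xb) with (vscal t v) in Hmin
          by (apply functional_extensionality; intros; unfold vsub, vadd, vscal; ring).
        rewrite vnorm_scal, Rabs_right in Hmin by lra.
        specialize (Hmin ltac:(nra) ne).
        pose proof (pow2_ge_0 (t * vnorm v)). nra. }
      assert (t * (- h v) <= t * (t * (K * vnorm v * vnorm v))) by nra.
      apply (Rmult_le_reg_l t); auto. }
    apply Hfr. intros v. rewrite inner_zero_l. pose proof (hz v). pose proof (hz (vscal (-1) v)).
    rewrite hneg in H0. lra.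
  -
    intros Hf0.
    assert (hz : forall v, h v = 0).
    { intros v. pose proof (vnorm_nonneg _ v).
      assert (Rabs (h v) <= 0); [|pose proof (Rabs_pos (h v)); destruct (Req_dec (h v) 0); auto; apply Rabs_no_R0 in H2; lra].
      apply eps_le. intros eps He. rewrite Rplus_0_l.
      destruct (Hf0 (eps / (vnorm v + 1))) as [d [dp Hd]]. { apply Rdiv_lt_0_compat; lra. }
      assert (Rabs (h v) - eps <= 0); [|lra].
      apply (small_le _ (K * vnorm v * vnorm v) (Rmin rho d / (vnorm v + 1))).
      { apply Rdiv_lt_0_compat; [apply Rmin_glb_lt|]; lra. }
      intros t [Ht0 Ht].
      assert (Htb : t * (vnorm v + 1) < Rmin rho d).
      { apply (Rmult_lt_compat_r (vnorm v + 1)) in Ht; [|lra]. field_simplify in Ht; lra. }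
      pose proof (Rmin_l rho d). pose proof (Rmin_r rho d).
      assert (A := SGx (vscal t v)). rewrite vnorm_scal, Rabs_right, hom in A by lra.
      specialize (A ltac:(nra)).
      specialize (Hd (vadd xb (vscal t v))).
      replace (vsub (vadd xb (vscal t v)) xb) with (vscal t v) in Hd
          by (apply functional_extensionality; intros; unfold vsub, vadd, vscal; ring).
      rewrite inner_zero_l, vnorm_scal, Rabs_right in Hd by lra.
      specialize (Hd ltac:(nra)).
      assert (E1 : eps / (vnorm v + 1) * (t * vnorm v) <= t * eps).
      { assert (eps / (vnorm v + 1) * vnorm v <= eps).
        { apply (Rmult_le_reg_r (vnorm v + 1)); [lra|]. field_simplify; [nra|lra]. }
        nra. }
      apply abs_split in A. apply abs_split in Hd.
      assert (Q : Rabs (t * h v) <= t * eps + t * (t * (K * vnorm v * vnorm v))) by (apply Rabs_le; split; nra).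
      rewrite Rabs_mult, Rabs_right in Q by lra.
      apply (Rmult_le_reg_l t); auto. lra. }
    assert (SG0 : forall y w, vnorm (vsub y xb) + vnorm w < rho -> Rabs (f (vadd y w) - f y) <= K * (vnorm (vsub y xb) + vnorm w) * vnorm w).
    { intros y w Hyw. pose proof (SG y w Hyw). rewrite hz, Rminus_0_r in H. auto. }
    apply NNPP; intros Hn.
    assert (Hseq : forall k : nat, exists z, vnorm (vsub z xb) < / (INR k + 1) /\ z <> xb /\ f z <= f xb + / (INR k + 1) * vnorm (vsub z xb) ^ 2).
    { intros k. pose proof (pos_INR k). assert (ip: 0 < / (INR k + 1)) by (apply Rinv_0_lt_compat; lra).
      apply NNPP; intros Hne. apply Hn. exists (/ (INR k + 1)), (/ (INR k + 1)). split; auto. split; auto.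
      intros z Hz1 Hz2. apply Rnot_le_gt. intros Hz3. apply Hne. exists z. auto. }
    set (Z := fun k => proj1_sig (constructive_indefinite_description _ (Hseq k))).
    assert (HZ : forall k, vnorm (vsub (Z k) xb) < / (INR k + 1) /\ Z k <> xb /\ f (Z k) <= f xb + / (INR k + 1) * vnorm (vsub (Z k) xb) ^ 2).
    { intros k. unfold Z. destruct (constructive_indefinite_description _ _). auto. }
    clearbody Z.
    set (T := fun k => vnorm (vsub (Z k) xb)).
    assert (Tp : forall k, 0 < T k).
    { intros k. destruct (HZ k) as [_ [ne _]]. pose proof (vnorm_nonneg _ (vsub (Z k) xb)).
      destruct (Req_dec (T k) 0) as [e|e]; [|unfold T in *; lra].
      exfalso. apply ne. apply vnorm_zero in e. apply functional_extensionality; intros i.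
      assert (vsub (Z k) xb i = 0) by (rewrite e; reflexivity). unfold vsub in H0. lra. }
    set (U := fun k => vscal (/ T k) (vsub (Z k) xb)).
    assert (NU : forall k, vnorm (U k) = 1).
    { intros k. pose proof (Tp k). unfold U. rewrite vnorm_scal.
      rewrite Rabs_right by (left; apply Rinv_0_lt_compat; auto).
      change (vnorm (vsub (Z k) xb)) with (T k). field. lra. }
    assert (ZU : forall k, Z k = vadd xb (vscal (T k) (U k))).
    { intros k. pose proof (Tp k). apply functional_extensionality; intros i. unfold U, vadd, vscal, vsub. field. lra. }
    destruct (BWn n 1 U) as [phi [c [Hphi Hcv]]].
    { intros k i. rewrite <- (NU k). apply vnorm_coord. }
    assert (Nc : vnorm c = 1).
    { assert (Q : Rabs (vnorm c - 1) <= 0).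
      { apply eps_le. intros eps He. rewrite Rplus_0_l. destruct (Hcv eps He) as [N HN]. specialize (HN N (le_n _)).
        pose proof (vnorm_triangle _ (U (phi N)) (vsub c (U (phi N)))) as T1.
        pose proof (vnorm_triangle _ c (vsub (U (phi N)) c)) as T2.
        replace (vadd (U (phi N)) (vsub c (U (phi N)))) with c in T1
          by (apply functional_extensionality; intros; unfold vadd, vsub; ring).
        replace (vadd c (vsub (U (phi N)) c)) with (U (phi N)) in T2
          by (apply functional_extensionality; intros; unfold vadd, vsub; ring).
        rewrite NU in T1, T2. rewrite vnorm_sub_sym in T1. apply Rabs_le. lra. }
      pose proof (Rabs_pos (vnorm c - 1)). destruct (Req_dec (vnorm c - 1) 0). lra.
      apply Rabs_no_R0 in H0. lra. }
    assert (Hd0 : dini f xb c (Fin 0)) by (rewrite <- (hz c); apply Hh).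
    destruct (Hspc c Nc Hd0) as [del [al [delp [alp Hsp]]]].
    set (eta := Rmin 1 (al / (4 * K + 1))).
    assert (eta1 : eta <= 1) by apply Rmin_l.
    assert (eta2 : eta <= al / (4 * K + 1)) by apply Rmin_r.
    assert (etap : 0 < eta) by (apply Rmin_glb_lt; [lra|apply Rdiv_lt_0_compat; lra]).
    assert (eta3 : eta * (4 * K + 1) <= al).
    { apply (Rmult_le_compat_r (4 * K + 1)) in eta2; [|lra]. field_simplify in eta2; lra. }
    destruct (Hcv eta etap) as [N1 HN1].
    assert (mp : 0 < Rmin (al/4) (Rmin del (rho/2))).
    { apply Rmin_glb_lt; [lra|]. apply Rmin_glb_lt; lra. }
    destruct (inv_small _ mp) as [N2 HN2].
    pose proof (Rmin_l (al/4) (Rmin del (rho/2))) as m1.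
    pose proof (Rmin_r (al/4) (Rmin del (rho/2))) as m2.
    pose proof (Rmin_l del (rho/2)) as m3. pose proof (Rmin_r del (rho/2)) as m4.
    set (k := max N1 N2). set (j := phi k).
    assert (kj : (k <= j)%nat) by (apply incr_ge; auto).
    specialize (HN1 k (Nat.le_max_l _ _)). specialize (HN2 j ltac:(unfold k in kj; lia)).
    destruct (HZ j) as [Hz1 [_ Hz3]].
    change (vnorm (vsub (Z j) xb)) with (T j) in Hz1, Hz3.
    pose proof (Tp j) as tp.
    fold j in HN1.
    set (t := T j) in *. set (u' := U j) in *.
    set (w := vnorm (vsub c u')).
    assert (wn : 0 <= w) by apply vnorm_nonneg.
    assert (wl : w < eta) by (unfold w; rewrite vnorm_sub_sym; auto).
    assert (G := SG0 (Z j) (vscal t (vsub c u'))).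
    change (vnorm (vsub (Z j) xb)) with t in G.
    rewrite vnorm_scal, Rabs_right in G by lra. fold w in G.
    replace (vadd (Z j) (vscal t (vsub c u'))) with (vadd xb (vscal t c)) in G
      by (rewrite (ZU j); apply functional_extensionality; intros; unfold vadd, vscal, vsub; fold t; fold u'; ring).
    specialize (G ltac:(nra)). apply abs_split in G.
    specialize (Hsp t ltac:(lra)).
    set (s := t ^ 2) in *. assert (sp : 0 < s) by (unfold s; nra).
    assert (P1 : / (INR j + 1) * s <= al / 4 * s) by (apply Rmult_le_compat_r; lra).
    assert (P2 : K * (t + t * w) * (t * w) <= 2 * K * eta * s).
    { unfold s. assert (t * w <= t * eta) by nra. assert (t + t * w <= 2 * t) by nra. 
      assert (0 <= t * w) by nra. assert (0 <= K * (t + t * w)) by nra.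
      apply Rle_trans with (K * (t + t * w) * (t * eta)). nra. nra. }
    assert (P3 : 2 * K * eta * s <= al / 2 * s).
    { apply Rmult_le_compat_r; lra. }
    assert (0 < al * s) by nra.
    lra.
Qed.
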